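(* For all integers $k\ge 1$ and $t\ge 1$, $$B_0(k+1,2t)+B_1(k,2t-1)=B_1(k,2t-2k-1)+p_{de}(2t-k-1)+p_{do}(2t-2k-1).$$
   Context: For a partition $\pi$, $s(\pi)$ is its smallest part. For $j\ge1$, $\mathrm{Spt}j_{do}(n)$ is the set of partitions $\pi$ of $n$ in which $s(\pi)$ occurs exactly $j$ times and the remaining parts (those larger than $s(\pi)$) are pairwise distinct and each has parity different from that of $s(\pi)$. $B_0(j,n)$ (resp. $B_1(j,n)$) is the number of $\pi\in\mathrm{Spt}j_{do}(n)$ whose number of parts greater than $s(\pi)$ is even (resp. odd); $B_0(j,n)=B_1(j,n)=0$ for $n\le 0$. $p_{de}(n)$ (resp. $p_{do}(n)$) is the number of partitions of $n$ into distinct even (resp. distinct odd) parts, with value $1$ at $n=0$ and $0$ for $n<0$. *)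

(* Defs.v *)
From mathcomp Require Import all_boot all_order all_algebra.
Set Implicit Arguments. Unset Strict Implicit. Unset Printing Implicit Defensive.

(* A partition of n is encoded by its multiplicity function:
   m i = number of times the part (i+1) occurs, for parts 1..n
   (each multiplicity is at most n, hence the codomain 'I_n.+1). *)
Definition multfun (n : nat) := {ffun 'I_n -> 'I_n.+1}.

Definition is_partition (n : nat) (m : multfun n) : bool :=
  \sum_(i < n) i.+1 * m i == n.

(* pi is in Spt j_do(n) with smallest part s(pi) = s.+1, and the number of
   parts larger than s(pi) has parity b (false = even, true = odd). *)
Definition in_Sptjdo_par (j n : nat) (b : bool) (m : multfun n) : bool :=
  is_partition m &&
  [exists s : 'I_n,
     [&& 0 < m s,
         [forall i : 'I_n, (i < s) ==> (m i == 0 :> nat)],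
         m s == j :> nat,
         [forall i : 'I_n, (s < i) ==>
             ((m i <= 1) && ((0 < m i) ==> (odd i.+1 != odd s.+1)))]
       & odd (\sum_(i < n | s < i) m i) == b]].

(* B_0 (b = false) and B_1 (b = true); zero for n <= 0. *)
Definition Bcount (b : bool) (j : nat) (n : int) : nat :=
  match n with
  | Posz n' => #|[set m : multfun n' | in_Sptjdo_par j b m]|
  | Negz _ => 0
  end.
Definition B0 := Bcount false.
Definition B1 := Bcount true.

Definition p_dpar (par : bool) (n : int) : nat :=
  match n with
  | Posz n' => #|[set m : multfun n' | is_partition m &&
                  [forall i : 'I_n', (m i <= 1) && ((0 < m i) ==> (odd i.+1 == par))]]|
  | Negz _ => 0
  end.
Definition p_de := p_dpar false.
Definition p_do := p_dpar true.

(* Main.v *)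
Require Import Defs.
From mathcomp Require Import all_boot all_order all_algebra.
From mathcomp Require Import zify.
Set Implicit Arguments. Unset Strict Implicit. Unset Printing Implicit Defensive.

Fixpoint Dp (Q : pred nat) (M N : nat) (b : bool) : nat :=
  match M with
  | 0 => ((N == 0) && ~~ b : nat)
  | M'.+1 => Dp Q M' N b +
      (if Q M'.+1 && (M'.+1 <= N) then Dp Q M' (N - M'.+1) (~~ b) else 0)
  end.

Definition Dset n (Q : pred nat) (M N : nat) (b : bool) : {set multfun n} :=
  [set m : multfun n | [forall i : 'I_n, (m i <= 1) && ((0 < m i) ==> (Q i.+1 && (i < M)))]
     && (\sum_(i < n) i.+1 * m i == N) && (odd (\sum_(i < n) (m i : nat)) == b)].

Definition upd n (m : multfun n) (x : 'I_n) (v : 'I_n.+1) : multfun n :=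
  [ffun i => if i == x then v else m i].

Lemma sum_upd n (G : 'I_n -> nat -> nat) (m : multfun n) x v :
  \sum_(i < n) G i (upd m x v i) = G x v + \sum_(i < n | i != x) G i (m i).
Proof.
  rewrite (bigD1 x) //= /upd ffunE eqxx; congr (_ + _).
  apply: eq_bigr => i /negbTE Hi; by rewrite ffunE Hi.
Qed.

Lemma sum_split n (G : 'I_n -> nat -> nat) (m : multfun n) x :
  \sum_(i < n) G i (m i) = G x (m x) + \sum_(i < n | i != x) G i (m i).
Proof. by rewrite (bigD1 x). Qed.

Lemma Dset0 n Q N b : #|Dset n Q 0 N b| = ((N == 0) && ~~ b).
Proof.
  set z : multfun n := [ffun => ord0].
  have Hz : forall m, m \in Dset n Q 0 N b -> m = z.
  { move=> m; rewrite inE => /andP[/andP[/forallP H _] _]; apply/ffunP=> i.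
    rewrite ffunE; apply/val_inj => /=. move: (H i) => /andP[_].
    by rewrite ltn0 andbF implybF lt0n negbK => /eqP. }
  have Hs1 : \sum_(i < n) i.+1 * z i = 0 by apply big1 => i _; rewrite ffunE muln0.
  have Hs2 : \sum_(i < n) (z i : nat) = 0 by apply big1 => i _; rewrite ffunE.
  case E: ((N == 0) && ~~ b).
  - have -> : Dset n Q 0 N b = [set z]; last by rewrite cards1.
    apply/setP => m; rewrite in_set1; apply/idP/idP.
    + by move=> Hm; rewrite (Hz _ Hm).
    + move/eqP => ->; rewrite inE Hs1 Hs2; move/andP: E => [/eqP -> /negbTE ->].
      apply/andP; split => //; apply/andP; split => //; apply/forallP => i; by rewrite ffunE.
  - apply/eqP; rewrite cards_eq0; apply/eqP/setP => m; rewrite in_set0.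
    apply/negP => Hm. have Em := Hz _ Hm. move: Hm; rewrite Em inE Hs1 Hs2.
    move=> /andP[/andP[_ /eqP HN] /eqP Hb]. by rewrite -HN -Hb in E.
Qed.

Lemma sum_upd_w n (m : multfun n) (x : 'I_n) v :
  \sum_(i < n) i.+1 * upd m x v i = x.+1 * v + \sum_(i < n | i != x) i.+1 * m i.
Proof. exact: (sum_upd (fun i y => i.+1 * y)). Qed.
Lemma sum_upd_1 n (m : multfun n) (x : 'I_n) v :
  \sum_(i < n) (upd m x v i : nat) = v + \sum_(i < n | i != x) (m i : nat).
Proof. exact: (sum_upd (fun i y => y)). Qed.
Lemma sum_w n (m : multfun n) (x : 'I_n) :
  \sum_(i < n) i.+1 * m i = x.+1 * m x + \sum_(i < n | i != x) i.+1 * m i.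
Proof. by rewrite (bigD1 x). Qed.
Lemma sum_1 n (m : multfun n) (x : 'I_n) :
  \sum_(i < n) (m i : nat) = m x + \sum_(i < n | i != x) (m i : nat).
Proof. by rewrite (bigD1 x). Qed.

Lemma upd_at n (m : multfun n) (x : 'I_n) v i : upd m x v i = if i == x then v else m i.
Proof. by rewrite ffunE. Qed.

Lemma fa_step n Q M (HM : M < n) (m : multfun n) :
  [forall i : 'I_n, (m i <= 1) && ((0 < m i) ==> (Q i.+1 && (i < M.+1)))]
    && (m (Ordinal HM) == 0 :> nat) =
  [forall i : 'I_n, (m i <= 1) && ((0 < m i) ==> (Q i.+1 && (i < M)))].
Proof.
  apply/andP/forallP.
  - move=> [/forallP H /eqP H0] i; move: (H i) => /andP[-> /=].
    case: (i =P Ordinal HM) => [->|Hix]; first by rewrite H0.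
    have HiM : (i : nat) != M by apply/eqP => E; apply: Hix; apply: val_inj.
    have -> : (i < M.+1) = (i < M) by rewrite ltnS leq_eqVlt (negbTE HiM).
    by [].
  - move=> H; split.
    + apply/forallP => i; move: (H i) => /andP[-> /=] /implyP Hi; apply/implyP => /Hi.
      by case/andP => -> /= /ltnW.
    + move: (H (Ordinal HM)) => /andP[_ /implyP Hi]; apply/eqP.
      case: (posnP (m (Ordinal HM))) => // /Hi /andP[_]; by rewrite ltnn.
Qed.

Lemma Dset_x0 n (Q : pred nat) M N b (HM : M < n) (m : multfun n) :
  m \in Dset n Q M N b -> (m (Ordinal HM) : nat) = 0.
Proof.
  rewrite inE => /andP[/andP[/forallP H _] _]; move: (H (Ordinal HM)) => /andP[_ /implyP Hi].
  case: (posnP (m (Ordinal HM))) => // /Hi /andP[_]; by rewrite /= ltnn.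
Qed.

Lemma Dset_upd n (Q : pred nat) M N b (HM : M < n) (m : multfun n) (v : 'I_n.+1) :
  (v : nat) = 1 -> Q M.+1 -> m \in Dset n Q M N b ->
  upd m (Ordinal HM) v \in Dset n Q M.+1 (N + M.+1) (~~ b).
Proof.
  move=> Hv HQ Hm; have H0 := Dset_x0 HM Hm.
  move: Hm; rewrite !inE => /andP[/andP[/forallP H /eqP HS] /eqP HO].
  rewrite sum_upd_w sum_upd_1 Hv; rewrite (sum_w m (Ordinal HM)) H0 in HS.
  rewrite (sum_1 m (Ordinal HM)) H0 in HO.
  apply/andP; split; [apply/andP; split|].
  - apply/forallP => i; rewrite upd_at; case: (i =P Ordinal HM) => [->|_].
    + by rewrite Hv /= HQ ltnSn.
    + move: (H i) => /andP[-> /implyP Hi]; apply/implyP => /Hi /andP[-> /=]; apply: ltnW.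
  - by rewrite -HS /= muln0 muln1 add0n addnC.
  - by rewrite -HO /= add0n.
Qed.

Lemma Dset_down n (Q : pred nat) M N b (HM : M < n) (m : multfun n) :
  (m (Ordinal HM) : nat) = 1 -> m \in Dset n Q M.+1 N b ->
  [/\ Q M.+1, M.+1 <= N & upd m (Ordinal HM) ord0 \in Dset n Q M (N - M.+1) (~~ b)].
Proof.
  move=> H1; rewrite !inE => /andP[/andP[/forallP H /eqP HS] /eqP HO].
  rewrite (sum_w m (Ordinal HM)) H1 muln1 in HS.
  rewrite (sum_1 m (Ordinal HM)) H1 in HO.
  have HQ : Q M.+1.
  { move: (H (Ordinal HM)) => /andP[_ /implyP Hi].
    have : 0 < m (Ordinal HM) by rewrite H1.
    by move/Hi => /andP[]. }
  split => //; first by rewrite -HS /= leq_addr.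
  rewrite sum_upd_w sum_upd_1 /= muln0 !add0n -HS /= addKn eqxx /=.
  rewrite andbT; apply/andP; split; last by rewrite -HO oddD negbK.
  apply/forallP => i; rewrite upd_at; case: (i =P Ordinal HM) => [->//|Hix].
  have HiM : (i : nat) != M by apply/eqP => E; apply: Hix; apply: val_inj.
  move: (H i) => /andP[-> /implyP Hi]; apply/implyP => /Hi /andP[-> /=].
  by rewrite ltnS leq_eqVlt (negbTE HiM).
Qed.

Lemma DsetS n (Q : pred nat) M N b (HM : M < n) :
  #|Dset n Q M.+1 N b| = #|Dset n Q M N b| +
     (if Q M.+1 && (M.+1 <= N) then #|Dset n Q M (N - M.+1) (~~ b)| else 0).
Proof.
  set x : 'I_n := Ordinal HM.
  rewrite -(cardsID [set m : multfun n | m x == 0 :> nat] (Dset n Q M.+1 N b)).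
  congr (_ + _).
  { apply: eq_card => m; rewrite !inE -(fa_step Q HM m).
    set F := [forall i : 'I_n, _]. set Z := (m x == 0 :> nat).
    by case: F; case: Z; case: (_ == N); case: (_ == b). }
  have Hv : ((inord 1 : 'I_n.+1) : nat) = 1 by rewrite inordK // ltnS; case: n HM x => //.
  case C: (Q M.+1 && (M.+1 <= N)); last first.
  { apply/eqP; rewrite cards_eq0; apply/eqP/setP => m; rewrite in_set0.
    apply/negP => /setDP [Hm Hmx]; rewrite inE in Hmx.
    have Hm1 : (m x : nat) = 1.
    { move: Hm; rewrite inE => /andP[/andP[/forallP H _] _]; move: (H x) => /andP[H1 _].
      move: Hmx H1; case: (m x : nat) => [|[|]] //. }
    have [HQ HN _] := Dset_down Hm1 Hm. by rewrite HQ HN in C. }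
  have Hinj : {in Dset n Q M (N - M.+1) (~~ b) &, injective (fun m => upd m x (inord 1))}.
  { move=> m1 m2 H1 H2 E; apply/ffunP => i; have := congr1 (fun f : multfun n => f i) E.
    rewrite /= !upd_at; case: (i =P x) => [-> _|_ //]. apply: val_inj.
    change ((m1 x : nat) = m2 x); by rewrite /x (Dset_x0 HM H1) (Dset_x0 HM H2). }
  rewrite -(card_in_imset Hinj); apply: eq_card => m.
  apply/idP/idP.
  - move=> /setDP [Hm Hmx]; rewrite inE in Hmx.
    have Hm1 : (m x : nat) = 1.
    { move: Hm; rewrite inE => /andP[/andP[/forallP H _] _]; move: (H x) => /andP[H1 _].
      move: Hmx H1; case: (m x : nat) => [|[|]] //. }
    have [HQ HN Hm'] := Dset_down Hm1 Hm.
    apply/imsetP; exists (upd m x ord0) => //.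
    apply/ffunP => i; rewrite !upd_at; case: (i =P x) => [->|//].
    apply: val_inj; change ((m x : nat) = (inord 1 : 'I_n.+1)); by rewrite Hv Hm1.
  - case/imsetP => m' Hm' ->; apply/setDP; split; last by rewrite inE upd_at eqxx Hv.
    move/andP: C => [HQ HN].
    have := Dset_upd HM Hv HQ Hm'; by rewrite subnK // negbK.
Qed.

Lemma Dset_card n (Q : pred nat) M N b : M <= n -> #|Dset n Q M N b| = Dp Q M N b.
Proof.
  elim: M N b => [|M IH] N b HM; first by rewrite Dset0.
  rewrite (DsetS _ _ _ HM) /= IH ?(ltnW HM) //.
  by case: (_ && _); rewrite // IH // ltnW.
Qed.

Definition Qa (a : nat) : pred nat := fun x => (a <= x) && (odd x == odd a).

Definition Sprop n j b (s : 'I_n) (m : multfun n) : bool :=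
     [&& 0 < m s,
         [forall i : 'I_n, (i < s) ==> (m i == 0 :> nat)],
         m s == j :> nat,
         [forall i : 'I_n, (s < i) ==>
             ((m i <= 1) && ((0 < m i) ==> (odd i.+1 != odd s.+1)))]
       & odd (\sum_(i < n | s < i) m i) == b].

Definition Sset n j b (s : 'I_n) := [set m : multfun n | is_partition m && Sprop j b s m].

Lemma sum_gt_ne n (m : multfun n) (s : 'I_n) :
  (forall i : 'I_n, i < s -> (m i : nat) = 0) ->
  \sum_(i < n | s < i) (m i : nat) = \sum_(i < n | i != s) (m i : nat).
Proof.
  move=> H; rewrite [LHS]big_mkcond [RHS]big_mkcond; apply: eq_bigr => i _.
  case: (ltngtP i s) => [/H ->|Hsi|/val_inj ->]; rewrite ?eqxx ?ltnn //.
  - by case: (_ != _).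
  - have -> : (i != s) by apply/eqP => E; rewrite E ltnn in Hsi.
    by [].
Qed.

Lemma Sset_down n j b (s : 'I_n) (m : multfun n) : m \in Sset j b s ->
  [/\ j * s.+1 <= n, (m s : nat) = j &
      upd m s ord0 \in Dset n (Qa s.+2) n (n - j * s.+1) b].
Proof.
  rewrite inE /is_partition /Sprop => /andP[/eqP HS /and5P[Hpos /forallP Hlt /eqP Hj /forallP Hgt /eqP HO]].
  have H0 : forall i : 'I_n, i < s -> (m i : nat) = 0.
  { by move=> i Hi; move: (Hlt i); rewrite Hi => /eqP. }
  rewrite (sum_w m s) Hj in HS.
  have Hle : j * s.+1 <= n.
  { move: (leq_addr (\sum_(i < n | i != s) i.+1 * m i) (s.+1 * j)); by rewrite HS mulnC. }
  have Hrest : \sum_(i < n | i != s) i.+1 * m i = n - j * s.+1.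
  { by rewrite -[X in _ = X - _]HS mulnC addKn. }
  split => //.
  rewrite inE sum_upd_w sum_upd_1 /= muln0 !add0n Hrest eqxx andbT.
  rewrite -(sum_gt_ne H0) HO eqxx andbT.
  apply/forallP => i; rewrite upd_at; case: (i =P s) => [->//|Hix].
  case: (ltngtP i s) => [Hi|Hi|/val_inj Hi //].
  - by rewrite (H0 _ Hi).
  - move: (Hgt i); rewrite Hi /= => /andP[-> /implyP Hp]; apply/implyP => /Hp Hodd.
    rewrite /Qa ltnS Hi ltn_ord /= andbT.
    by move: Hodd; case: (odd i); case: (odd s).
Qed.

Lemma Dset_le0 n M N b (s : 'I_n) (m : multfun n) :
  m \in Dset n (Qa s.+2) M N b -> forall i : 'I_n, i <= s -> (m i : nat) = 0.
Proof.
  rewrite inE => /andP[/andP[/forallP H _] _] i Hi.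
  move: (H i) => /andP[_ /implyP Hp]; case: (posnP (m i)) => // /Hp /andP[].
  rewrite /Qa ltnS => /andP[Hsi _]; by rewrite ltnNge Hi in Hsi.
Qed.

Lemma Sset_up n j b (s : 'I_n) (m : multfun n) : 0 < j -> j * s.+1 <= n ->
  m \in Dset n (Qa s.+2) n (n - j * s.+1) b -> upd m s (inord j) \in Sset j b s.
Proof.
  move=> Hj Hle Hm; have H0 := Dset_le0 Hm.
  have Hjn : j < n.+1 by rewrite ltnS; apply: leq_trans Hle; rewrite leq_pmulr.
  have Hv : ((inord j : 'I_n.+1) : nat) = j by rewrite inordK.
  move: Hm; rewrite inE => /andP[/andP[/forallP H /eqP HS] /eqP HO].
  rewrite (sum_w m s) H0 // muln0 add0n in HS.
  rewrite (sum_1 m s) H0 // add0n in HO.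
  have Hne : forall i : 'I_n, i < s -> (upd m s (inord j) i : nat) = 0.
  { move=> i Hi; rewrite upd_at; case: (i =P s) => [E|_]; first by rewrite E ltnn in Hi.
    by apply: H0; apply: ltnW. }
  rewrite inE /is_partition /Sprop sum_upd_w Hv HS mulnC subnKC // eqxx /=.
  rewrite (sum_gt_ne Hne) upd_at eqxx Hv Hj eqxx /=.
  have -> : \sum_(i < n | i != s) (upd m s (inord j) i : nat) = \sum_(i < n | i != s) (m i : nat).
  { apply: eq_bigr => i /negbTE Hi; by rewrite upd_at Hi. }
  rewrite HO eqxx andbT; apply/andP; split.
  - apply/forallP => i; apply/implyP => Hi; by rewrite Hne.
  - apply/forallP => i; apply/implyP => Hi; rewrite upd_at.
    have -> : (i == s) = false by apply/eqP => E; rewrite E ltnn in Hi.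
    move: (H i) => /andP[-> /implyP Hp]; apply/implyP => /Hp /andP[].
    rewrite /Qa /= => /andP[_ Ho] _. by move: Ho; case: (odd i); case: (odd s).
Qed.

Lemma Sset_card n j b (s : 'I_n) : 0 < j ->
  #|Sset j b s| = if j * s.+1 <= n then Dp (Qa s.+2) n (n - j * s.+1) b else 0.
Proof.
  move=> Hj; case: ifP => Hle; last first.
  { apply/eqP; rewrite cards_eq0; apply/eqP/setP => m; rewrite in_set0.
    apply/negP => /Sset_down [H _ _]; by rewrite H in Hle. }
  rewrite -(@Dset_card n) //.
  have Hinj : {in Dset n (Qa s.+2) n (n - j * s.+1) b &, injective (fun m => upd m s (inord j))}.
  { move=> m1 m2 H1 H2 E; apply/ffunP => i; have := congr1 (fun f : multfun n => f i) E.
    rewrite /= !upd_at; case: (i =P s) => [-> _|_ //]. apply: val_inj.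
    change ((m1 s : nat) = m2 s); by rewrite (Dset_le0 H1) ?(Dset_le0 H2). }
  rewrite -(card_in_imset Hinj); apply: eq_card => m.
  apply/idP/idP.
  - move=> Hm; have [_ Hms Hm'] := Sset_down Hm.
    apply/imsetP; exists (upd m s ord0) => //.
    apply/ffunP => i; rewrite !upd_at; case: (i =P s) => [->|//].
    apply: val_inj; change ((m s : nat) = (inord j : 'I_n.+1)).
    rewrite Hms inordK // ltnS; apply: leq_trans Hle; by rewrite leq_pmulr.
  - case/imsetP => m' Hm' ->; exact: Sset_up.
Qed.




Lemma card_Spt n j b : 0 < j ->
  #|[set m : multfun n | in_Sptjdo_par j b m]| = \sum_(s < n) #|Sset j b s|.
Proof.
  move=> Hj.
  have E : forall A : {set multfun n}, #|A| = \sum_(m : multfun n) (m \in A : nat).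
  { move=> A; by rewrite -sum1_card big_mkcond. }
  rewrite E (eq_bigr (fun s => \sum_(m : multfun n) (m \in Sset j b s : nat))); last by move=> s _; rewrite E.
  rewrite exchange_big /=; apply: eq_bigr => m _.
  rewrite inE /in_Sptjdo_par.
  have Huniq : forall s1 s2 : 'I_n, Sprop j b s1 m -> Sprop j b s2 m -> s1 = s2.
  { move=> s1 s2 /and5P[H1 /forallP L1 _ _ _] /and5P[H2 /forallP L2 _ _ _].
    apply: val_inj; apply/eqP; rewrite eqn_leq; apply/andP; split; rewrite leqNgt.
    - apply/negP => Hlt; move: (L1 s2); rewrite Hlt /= => /eqP E2; by rewrite E2 in H2.
    - apply/negP => Hlt; move: (L2 s1); rewrite Hlt /= => /eqP E1; by rewrite E1 in H1. }
  case: (boolP (is_partition m)) => Hp /=; last first.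
  { symmetry; apply: big1 => s _; by rewrite inE (negbTE Hp). }
  case: (boolP [exists s, Sprop j b s m]).
  - case/existsP => s0 Hs0.
    rewrite (bigD1 s0) //= inE Hp Hs0 big1 //.
    move=> s Hs; rewrite inE Hp /=; case: (boolP (Sprop j b s m)) => // Hs'.
    by rewrite (Huniq _ _ Hs' Hs0) eqxx in Hs.
  - move=> /existsPn Hn; symmetry; apply: big1 => s _; by rewrite inE Hp (negbTE (Hn s)).
Qed.

Lemma card_pd n par :
  #|[set m : multfun n | is_partition m &&
     [forall i : 'I_n, (m i <= 1) && ((0 < m i) ==> (odd i.+1 == par))]]|
  = Dp (fun x => odd x == par) n n false + Dp (fun x => odd x == par) n n true.
Proof.
  rewrite -!(@Dset_card n) //.
  rewrite -(cardsID [set m : multfun n | odd (\sum_(i < n) (m i : nat)) == false]).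
  have Hf : forall m : multfun n,
     [forall i : 'I_n, (m i <= 1) && ((0 < m i) ==> (odd i.+1 == par))] =
     [forall i : 'I_n, (m i <= 1) && ((0 < m i) ==> ((odd i.+1 == par) && (i < n)))].
  { move=> m; apply: eq_forallb => i; by rewrite ltn_ord andbT. }
  congr (_ + _); apply: eq_card => m; rewrite !inE /is_partition Hf.
  - by case: (_ == n); case: [forall i, _]; case: (odd _).
  - by case: (_ == n); case: [forall i, _]; case: (odd _).
Qed.

Lemma Dp_ext (Q Q' : pred nat) M N b :
  (forall x, 0 < x <= M -> Q x = Q' x) -> Dp Q M N b = Dp Q' M N b.
Proof.
  elim: M N b => [//|M IH] N b H /=.
  have H' : forall x, 0 < x <= M -> Q x = Q' x.
  { move=> x /andP[Hx1 Hx2]; apply: H; rewrite Hx1; exact: leqW. }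
  by rewrite !(IH _ _ H') H //= leqnn.
Qed.

Lemma Dp_trunc (Q : pred nat) M N b : N <= M -> Dp Q M N b = Dp Q N N b.
Proof.
  elim: M => [|M IH] HNM; first by move: HNM; rewrite leqn0 => /eqP ->.
  case: (ltngtP N M.+1) => [HN|HN|->] //; last by rewrite ltnNge HNM in HN.
  by rewrite /= IH // (leqNgt M.+1 N) HN andbF addn0.
Qed.

Lemma Dp_par (Q : pred nat) M N b :
  (forall x, Q x -> odd x) -> odd N != b -> Dp Q M N b = 0.
Proof.
  move=> HQ; elim: M N b => [|M IH] N b Hb /=.
  - by case: N Hb => [|N] //=; case: b.
  - rewrite IH //; case: ifP => // /andP[/HQ Ho HMN]; rewrite IH //.
    by rewrite oddB // Ho; case: (odd N) Hb; case: b.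
Qed.

Lemma Dp_add (Q : pred nat) a M N b : 0 < a -> ~~ Q a ->
  Dp (fun x => (x == a) || Q x) M N b =
  Dp Q M N b + (if (a <= M) && (a <= N) then Dp Q M (N - a) (~~ b) else 0).
Proof.
  move=> Ha HQa; elim: M N b => [|M IH] N b.
  - by rewrite /= leqNgt Ha /= addn0.
  - rewrite /= !IH.
    case: (M.+1 =P a) => [Ea|Ea].
    + subst a; rewrite /= (negbTE HQa) /=.
      repeat case: ifP => ?; lia.
    + have Ha' : (a <= M.+1) = (a <= M).
      { rewrite leq_eqVlt ltnS; case: (a =P M.+1) => // E; by rewrite E in Ea. }
      rewrite Ha' /= negbK.
      have -> : N - M.+1 - a = N - a - M.+1 by rewrite subnAC.
      repeat case: ifP => ?; lia.
Qed.

Definition F a N b := Dp (Qa a) N N b.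

Lemma B_eq b j n : 0 < j -> Bcount b j (Posz n) =
  \sum_(0 <= s < n) (if j * s.+1 <= n then F s.+2 (n - j * s.+1) b else 0).
Proof.
  move=> Hj; rewrite /Bcount card_Spt // big_mkord; apply: eq_bigr => s _.
  rewrite Sset_card //; case: ifP => // _; by rewrite /F (@Dp_trunc _ n) // leq_subr.
Qed.

Lemma P_eq par n : p_dpar par (Posz n) =
  F (if par then 1 else 2) n false + F (if par then 1 else 2) n true.
Proof.
  rewrite /p_dpar card_pd /F.
  have H : forall x, 0 < x <= n -> (odd x == par) = Qa (if par then 1 else 2) x.
  { move=> x /andP[Hx _]; rewrite /Qa; case: par; first by rewrite Hx.
    case: x Hx => [|[|x]] //. }
  by rewrite !(Dp_ext _ _ H).
Qed.

Lemma Qa_step a x : Qa a x = (x == a) || Qa a.+2 x.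
Proof.
  rewrite /Qa.
  have Eo : odd a.+2 = odd a by rewrite /= negbK.
  rewrite Eo; case: (ltngtP x a) => H /=.
  - have -> : (a.+1 < x) = false by apply/negbTE; rewrite -leqNgt; apply: ltnW; apply: ltnW.
    by [].
  - case: (x =P a.+1) => [->|/eqP Hx] /=; first by rewrite ltnn; case: (odd a).
    have -> : (a.+1 < x) = true by rewrite ltn_neqAle eq_sym Hx H.
    by [].
  - by rewrite H eqxx.
Qed.
Lemma F_step a N b : 0 < a ->
  F a N b = F a.+2 N b + (if a <= N then F a.+2 (N - a) (~~ b) else 0).
Proof.
  move=> Ha; rewrite /F (@Dp_ext (Qa a) (fun x => (x == a) || Qa a.+2 x)); last by move=> x _; exact: Qa_step.
  rewrite Dp_add //; last by rewrite /Qa ltnNge leqnSn.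
  rewrite andbb; case: ifP => // H; by rewrite (@Dp_trunc _ N) // leq_subr.
Qed.

Lemma F_par a N b : odd a -> odd N != b -> F a N b = 0.
Proof.
  move=> Ha Hb; apply: Dp_par => // x /andP[_ /eqP ->] //.
Qed.

Lemma big_widen (f : nat -> nat) n L : n <= L -> (forall s, n <= s -> s < L -> f s = 0) ->
  \sum_(0 <= s < n) f s = \sum_(0 <= s < L) f s.
Proof.
  move=> HnL H; rewrite (big_cat_nat (leq0n n) HnL) /= [X in _ + X]big1_seq ?addn0 //.
  move=> s /andP[_]; rewrite mem_index_iota => /andP[]; exact: H.
Qed.

Local Open Scope ring_scope.

Theorem lemma2 (k t : nat) (hk : (1 <= k)%N) (ht : (1 <= t)%N) :
  (B0 k.+1 (2 * t%:Z) + B1 k (2 * t%:Z - 1)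
   = B1 k (2 * t%:Z - 2 * k%:Z - 1) + p_de (2 * t%:Z - k%:Z - 1)
     + p_do (2 * t%:Z - 2 * k%:Z - 1))%N.
Proof.
  have E1 : 2 * t%:Z = Posz (2 * t)%N by lia.
  have E2 : 2 * t%:Z - 1 = Posz (2 * t - 1)%N by lia.
  rewrite E1 E2 /B0 /B1 !B_eq //.
  rewrite (@big_widen _ (2 * t - 1)%N (2 * t)%N); first last.
  - move=> s Hs1 Hs2; case: ifP => // Hc; exfalso.
    have : (2 * t <= k * s.+1)%N by rewrite mulnS; nia.
    lia.
  - lia.
  rewrite -big_split /=.
  have [L EL] : exists L, (2 * t = L.+2)%N by exists (2 * t - 2)%N; lia.
  rewrite EL !big_nat_recl //.
  have P1 : ((if k.+1 * 1 <= L.+2 then F 2 (L.+2 - k.+1 * 1) false else 0) +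
     (if k * 1 <= L.+2 - 1 then F 2 (L.+2 - 1 - k * 1) true else 0))%N
     = p_de (Posz L.+2 - Posz k - 1).
  { rewrite !muln1; case: (leqP k.+1 L.+2) => H.
    - have -> : Posz L.+2 - Posz k - 1 = Posz (L.+2 - k.+1)%N by lia.
      rewrite /p_de P_eq /=.
      have -> : (k <= L.+2 - 1)%N = true by lia.
      by have -> : (L.+2 - 1 - k = L.+2 - k.+1)%N by lia.
    - have -> : Posz L.+2 - Posz k - 1 = Negz (k - L.+2)%N by rewrite NegzE; lia.
      have -> : (k <= L.+2 - 1)%N = false by lia.
      by []. }
  have P2 : ((if k.+1 * 2 <= L.+2 then F 3 (L.+2 - k.+1 * 2) false else 0) +
     (if k * 2 <= L.+2 - 1 then F 3 (L.+2 - 1 - k * 2) true else 0))%N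
     = p_do (Posz L.+2 - 2 * Posz k - 1).
  { case: (leqP (k.+1 * 2) L.+2) => H.
    - set M := (L.+2 - 1 - k * 2)%N.
      have -> : Posz L.+2 - 2 * Posz k - 1 = Posz M by rewrite /M; lia.
      have HM : M = (2 * (t - k - 1)).+1 by rewrite /M; lia.
      have HoM : odd M by rewrite HM /= oddM.
      rewrite /p_do P_eq /= !(@F_step 1) //.
      have -> : (1 <= M)%N = true by rewrite HM.
      rewrite (@F_par 3 M false) // ?HoM // (@F_par 3 (M - 1) true) //; last first.
      { rewrite HM subn1 /= oddM; by []. }
      have -> : (k * 2 <= L.+2 - 1)%N = true by lia.
      have -> : (L.+2 - k.+1 * 2 = M - 1)%N by rewrite /M; lia.
      by rewrite /= !add0n addnC.
    - have -> : Posz L.+2 - 2 * Posz k - 1 = Negz (2 * k - L.+2)%N by rewrite NegzE; lia.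
      have -> : (k * 2 <= L.+2 - 1)%N = false by lia.
      by []. }
  have P3 : (\sum_(0 <= i < L)
       ((if k.+1 * i.+3 <= L.+2 then F i.+4 (L.+2 - k.+1 * i.+3) false else 0) +
        (if k * i.+3 <= L.+2 - 1 then F i.+4 (L.+2 - 1 - k * i.+3) true else 0)))%N
     = Bcount true k (Posz L.+2 - 2 * Posz k - 1).
  { case: (leqP t k) => H.
    - have -> : Posz L.+2 - 2 * Posz k - 1 = Negz (2 * k - L.+2)%N by rewrite NegzE; lia.
      rewrite /=; apply: big1_seq => i _.
      have -> : (k.+1 * i.+3 <= L.+2)%N = false by rewrite !(mulnS, mulSn); lia.
      have -> : (k * i.+3 <= L.+2 - 1)%N = false by rewrite !(mulnS, mulSn); lia.
      by [].
    - set n3 := (L.+2 - 2 * k - 1)%N.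
      have -> : Posz L.+2 - 2 * Posz k - 1 = Posz n3 by rewrite /n3; lia.
      rewrite B_eq // (@big_widen _ n3 L); first last.
      + move=> s Hs1 Hs2; have -> // : (k * s.+1 <= n3)%N = false.
        have := @leq_pmull s k hk; rewrite mulnS; lia.
      + rewrite /n3; lia.
      apply: eq_bigr => i _.
      rewrite (@F_step i.+2) //.
      have e1 : (n3 - k * i.+1 = L.+2 - 1 - k * i.+3)%N by rewrite /n3 !(mulnS, mulSn); lia.
      have e2 : (L.+2 - 1 - k * i.+3 - i.+2 = L.+2 - k.+1 * i.+3)%N by rewrite !(mulnS, mulSn); lia.
      rewrite e1 e2.
      have c1 : (k * i.+1 <= n3)%N = (k * i.+3 <= L.+2 - 1)%N.
      { rewrite /n3 !(mulnS, mulSn); apply/idP/idP => ?; lia. }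
      have c2 : (k * i.+3 <= L.+2 - 1)%N && (i.+2 <= L.+2 - 1 - k * i.+3)%N = (k.+1 * i.+3 <= L.+2)%N.
      { rewrite !(mulnS, mulSn); apply/idP/idP => [/andP[? ?]|?]; [lia|apply/andP; split; lia]. }
      rewrite c1; move: c2.
      case: (k * i.+3 <= L.+2 - 1)%N; case: (i.+2 <= L.+2 - 1 - k * i.+3)%N; case: (k.+1 * i.+3 <= L.+2)%N => //= _.
      all: lia. }
  rewrite P1 P2 P3; move: (p_de _) (p_do _) (Bcount _ _ _) => x y z; lia.
Qed.
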